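(* For all feasible $\boldsymbol\lambda\ne0$ with $\boldsymbol\lambda\succeq0$, we have $M(\boldsymbol\lambda)\succ0$ and $M(\boldsymbol\lambda)\succeq\boldsymbol\lambda$. Similarly, for all feasible $\boldsymbol\lambda\ne0$ with $\boldsymbol\lambda\preceq0$, we have $M(\boldsymbol\lambda)\prec0$ and $M(\boldsymbol\lambda)\preceq\boldsymbol\lambda$.
   Context: Setting: a mixture of two Bernoullis on $\{0,1\}^D$. - The true distribution is $p^*=\pi_1^*B(\cdot\mid\boldsymbol\mu_1^* )+\pi_2^*B(\cdot\mid\boldsymbol\mu_2^* )$, where $B(\mathbf x\mid\boldsymbol\mu)=\prod_i\mu_i^{x_i}(1-\mu_i)^{1-x_i}$, $\pi_1^*\in(0,1)$ and $\pi_2^*=1-\pi_1^*$. Notation: - $\overline{\mathbf x}=\mathbb E_{p^*}[\mathbf x]$, $S_i=\overline x_i(1-\overline x_i)$ and $\boldsymbol\mu^*=(\boldsymbol\mu_1^*-\boldsymbol\mu_2^* )/2$. - For $\boldsymbol\mu_1\in[0,1]^D$, set $\mathbf b=\boldsymbol\mu_1-\overline{\mathbf x}$ and $\lambda_i=2S_i^{-1}\mu_i^*b_i$. Feasible $\boldsymbol\lambda$ are those arising from $\boldsymbol\mu_1\in[0,1]^D$. - $Z_1(\boldsymbol\lambda)=\pi_1^*\prod_i(1+\pi_2^*\lambda_i)+\pi_2^*\prod_i(1-\pi_1^*\lambda_i)$. - $B_{1i}=\prod_{j\ne i}(1+\pi_2^*\lambda_j)$, $B_{2i}=\prod_{j\ne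 i}(1-\pi_1^*\lambda_j)$, and $\Lambda_i=\mu_{1i}(1-\mu_{1i})$. The leading-order EM update of $\boldsymbol\lambda$ in the one-cluster regime ($\pi_1$ small, $\boldsymbol\mu_2=\overline{\mathbf x}$) is $$M(\boldsymbol\lambda)_i=\lambda_i+(2S_i^{-1}\mu_i^* )^2\pi_1^*\pi_2^*\frac{\Lambda_i}{Z_1(\boldsymbol\lambda)}(B_{1i}-B_{2i}).$$ $\succeq$/$\succ$ denote non-strict/strict componentwise order. Standing assumption: $4\pi_1^*\pi_2^*\mu_i^*\mu_j^*\ne0$ for all $i\ne j$. *)

(* Defs.v *)
From HB Require Import structures.
From mathcomp Require Import all_boot all_order all_algebra.
Set Implicit Arguments. Unset Strict Implicit. Unset Printing Implicit Defensive.
Import Order.TTheory GRing.Theory Num.Theory.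
Local Open Scope ring_scope.

Section BernMix.
Variables (R : realFieldType) (D : nat).
(* pi1 = pi_1star, pi2 = 1 - pi1; m1, m2 = mu_1star, mu_2star *)
Variables (pi1 : R) (m1 m2 : 'I_D -> R).

Definition pi2 : R := 1 - pi1.

(* xbar = expectation of x under the true mixture *)
Definition xbar (i : 'I_D) : R := pi1 * m1 i + pi2 * m2 i.
Definition Svar (i : 'I_D) : R := xbar i * (1 - xbar i).
Definition mustar (i : 'I_D) : R := (m1 i - m2 i) / 2.

Definition lam_of (mu1 : 'I_D -> R) (i : 'I_D) : R :=
  2 * (Svar i)^-1 * mustar i * (mu1 i - xbar i).

Definition Z1 (lam : 'I_D -> R) : R :=
  pi1 * \prod_(j < D) (1 + pi2 * lam j) + pi2 * \prod_(j < D) (1 - pi1 * lam j).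

Definition B1 (lam : 'I_D -> R) (i : 'I_D) : R :=
  \prod_(j < D | j != i) (1 + pi2 * lam j).
Definition B2 (lam : 'I_D -> R) (i : 'I_D) : R :=
  \prod_(j < D | j != i) (1 - pi1 * lam j).

Definition Lam (mu1 : 'I_D -> R) (i : 'I_D) : R := mu1 i * (1 - mu1 i).

(* The leading-order EM update M(lambda); Lambda is computed from the mu1
   that gives rise to lambda. *)
Definition Mupd (mu1 : 'I_D -> R) (lam : 'I_D -> R) (i : 'I_D) : R :=
  lam i + (2 * (Svar i)^-1 * mustar i) ^+ 2 * pi1 * pi2
          * (Lam mu1 i / Z1 lam) * (B1 lam i - B2 lam i).

End BernMix.

(* Main.v *)
Require Import Defs.
From HB Require Import structures.
From mathcomp Require Import all_boot all_order all_algebra.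
From mathcomp Require Import ring lra.
Import Order.TTheory GRing.Theory Num.Theory.
Local Open Scope ring_scope.
Set Implicit Arguments. Unset Strict Implicit.

Lemma prod_ge1 (R : realFieldType) D (i : 'I_D) (F : 'I_D -> R) :
  (forall j, 1 <= F j) -> 1 <= \prod_(j < D | j != i) F j.
Proof.
move=> H; apply: (big_ind (fun x => 1 <= x)) => //.
by move=> x y hx hy; nra.
Qed.

Lemma prod_gt1 (R : realFieldType) D (i k : 'I_D) (F : 'I_D -> R) :
  (forall j, 1 <= F j) -> k != i -> 1 < F k -> 1 < \prod_(j < D | j != i) F j.
Proof.
move=> H ki Hk; rewrite (bigD1 k) //=.
have : 1 <= \prod_(j < D | (j != i) && (j != k)) F j.
  by apply: (big_ind (fun x => 1 <= x)) => // x y hx hy; nra.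
by move=> h; nra.
Qed.

Lemma prod_le1 (R : realFieldType) D (i : 'I_D) (F : 'I_D -> R) :
  (forall j, 0 <= F j <= 1) -> \prod_(j < D | j != i) F j <= 1.
Proof. by move=> H; apply: prodr_ile1. Qed.

Lemma prod_lt1 (R : realFieldType) D (i k : 'I_D) (F : 'I_D -> R) :
  (forall j, 0 <= F j <= 1) -> k != i -> F k < 1 -> \prod_(j < D | j != i) F j < 1.
Proof.
move=> H ki Hk; rewrite (bigD1 k) //=.
have h1 : \prod_(j < D | (j != i) && (j != k)) F j <= 1 by apply: prodr_ile1.
have h0 : 0 <= \prod_(j < D | (j != i) && (j != k)) F j.
  by apply: prodr_ge0 => j _; case/andP: (H j).
case/andP: (H k) => a b; nra.
Qed.

Lemma xbar_bounds (R : realFieldType) D (pi1 : R) (m1 m2 : 'I_D -> R) i :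
  0 < pi1 < 1 -> 0 <= m1 i <= 1 -> 0 <= m2 i <= 1 ->
  0 <= xbar pi1 m1 m2 i <= 1.
Proof.
rewrite /xbar /pi2 => /andP[p0 p1] /andP[a b] /andP[c d].
apply/andP; split; nra.
Qed.

Lemma S_pos (R : realFieldType) D (pi1 : R) (m1 m2 : 'I_D -> R) i :
  0 < pi1 < 1 -> 0 <= m1 i <= 1 -> 0 <= m2 i <= 1 -> mustar m1 m2 i != 0 ->
  0 < xbar pi1 m1 m2 i < 1.
Proof.
rewrite /mustar /xbar /pi2 => /andP[p0 p1] /andP[a b] /andP[c d] hm.
have hne : m1 i != m2 i.
  by apply: contra hm => /eqP ->; rewrite subrr mul0r.
case: (ltgtP (m1 i) (m2 i)) hne => // h _; apply/andP; split; nra.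
Qed.

Lemma fac_bounds (R : realFieldType) D (pi1 : R) (m1 m2 : 'I_D -> R) (mu1 : 'I_D -> R) j :
  0 < pi1 < 1 -> 0 <= m1 j <= 1 -> 0 <= m2 j <= 1 -> 0 <= mu1 j <= 1 ->
  0 <= 1 - pi1 * lam_of pi1 m1 m2 mu1 j /\ 0 <= 1 + pi2 pi1 * lam_of pi1 m1 m2 mu1 j.
Proof.
move=> hp h1 h2 hmu.
have [hz|hnz] := eqVneq (mustar m1 m2 j) 0.
  have -> : lam_of pi1 m1 m2 mu1 j = 0 by rewrite /lam_of hz mulr0 mul0r.
  by rewrite !mulr0 subr0 addr0; split.
have /andP[x0 x1] := S_pos hp h1 h2 hnz.
have Sp : 0 < Svar pi1 m1 m2 j by rewrite /Svar; nra.
have Sn : Svar pi1 m1 m2 j != 0 by rewrite gt_eqF.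
move: hp h1 h2 hmu => /andP[p0 p1] /andP[a b] /andP[c d] /andP[e f].
have E1 : 1 - pi1 * lam_of pi1 m1 m2 mu1 j =
  (mu1 j * (1 - xbar pi1 m1 m2 j) * m2 j + (1 - mu1 j) * xbar pi1 m1 m2 j * (1 - m2 j))
   / Svar pi1 m1 m2 j.
  apply: (mulIf Sn); rewrite divfK // /lam_of.
  move: Sn; set SS := Svar pi1 m1 m2 j; move=> Sn.
  have -> : (1 - pi1 * (2 * SS^-1 * mustar m1 m2 j * (mu1 j - xbar pi1 m1 m2 j))) * SS
     = SS - pi1 * 2 * mustar m1 m2 j * (mu1 j - xbar pi1 m1 m2 j) by field.
  rewrite /SS /Svar /mustar /xbar /pi2; field; done.
have E2 : 1 + pi2 pi1 * lam_of pi1 m1 m2 mu1 j =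
  (mu1 j * (1 - xbar pi1 m1 m2 j) * m1 j + (1 - mu1 j) * xbar pi1 m1 m2 j * (1 - m1 j))
   / Svar pi1 m1 m2 j.
  apply: (mulIf Sn); rewrite divfK // /lam_of.
  move: Sn; set ST := Svar pi1 m1 m2 j; move=> Sn.
  have -> : (1 + pi2 pi1 * (2 * ST^-1 * mustar m1 m2 j * (mu1 j - xbar pi1 m1 m2 j))) * ST
     = ST + pi2 pi1 * 2 * mustar m1 m2 j * (mu1 j - xbar pi1 m1 m2 j) by field.
  rewrite /ST /Svar /mustar /xbar /pi2; field; done.
have hx1 : 0 <= 1 - xbar pi1 m1 m2 j by lra.
have hx0 : 0 <= xbar pi1 m1 m2 j by lra.
rewrite E1 E2; split; apply: divr_ge0; try exact: ltW;
  apply: addr_ge0; repeat apply: mulr_ge0; lra.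
Qed.

Unset Implicit Arguments.

Theorem mainTheorem10 (R : realFieldType) (D : nat) (pi1 : R) (m1 m2 : 'I_D -> R) :
  0 < pi1 < 1 ->
  (forall i, 0 <= m1 i <= 1) ->
  (forall i, 0 <= m2 i <= 1) ->
  (forall i j : 'I_D, i != j ->
     4 * pi1 * pi2 pi1 * mustar m1 m2 i * mustar m1 m2 j != 0) ->
  forall (mu1 : 'I_D -> R), (forall i, 0 <= mu1 i <= 1) ->
  let lam := lam_of pi1 m1 m2 mu1 in
  let M := Mupd pi1 m1 m2 mu1 lam in
  ((forall i, 0 <= lam i) -> (exists i, lam i != 0) ->
     (forall i, 0 < M i) /\ (forall i, lam i <= M i)) /\
  ((forall i, lam i <= 0) -> (exists i, lam i != 0) ->
     (forall i, M i < 0) /\ (forall i, M i <= lam i)).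
Proof.
move=> hp h1 h2 hne mu1 hmu lam M.
have fb : forall j, 0 <= 1 - pi1 * lam j /\ 0 <= 1 + pi2 pi1 * lam j.
  by move=> j; apply: fac_bounds.
have /andP[p0 p1] := hp.
have q0 : 0 < pi2 pi1 by rewrite /pi2 subr_gt0.
have pq : 0 < pi1 * pi2 pi1 by apply: mulr_gt0.
set T := fun i => (2 * (Svar pi1 m1 m2 i)^-1 * mustar m1 m2 i) ^+ 2 * pi1 * pi2 pi1
          * (Lam mu1 i / Z1 pi1 lam).
have ME : forall i, M i = lam i + T i * (B1 pi1 lam i - B2 pi1 lam i).
  by move=> i; rewrite /M /Mupd /T mulrA.
have Tpos : 0 < Z1 pi1 lam -> forall i k, k != i -> lam i = 0 -> lam k != 0 -> 0 < T i.
  move=> Zp i k ki li lk.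
  have hm : mustar m1 m2 i != 0.
    move: (hne i k); rewrite eq_sym ki => /(_ isT).
    by rewrite mulf_eq0 negb_or => /andP[+ _]; rewrite mulf_eq0 negb_or => /andP[].
  have /andP[x0 x1] := S_pos hp (h1 i) (h2 i) hm.
  have Sn : Svar pi1 m1 m2 i != 0 by rewrite /Svar mulf_neq0 // ?gt_eqF // subr_gt0.
  have c0 : 2 * (Svar pi1 m1 m2 i)^-1 * mustar m1 m2 i != 0.
    have t2 : (2:R) != 0 by apply: lt0r_neq0; lra.
    apply: mulf_neq0 => //; apply: mulf_neq0 => //; by rewrite invr_eq0.
  have emu : mu1 i = xbar pi1 m1 m2 i.
    move: li; rewrite /lam /lam_of => /eqP; rewrite mulf_eq0 (negbTE c0) /=.
    by rewrite subr_eq0 => /eqP.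
  have L0 : 0 < Lam mu1 i by rewrite /Lam emu mulr_gt0 // subr_gt0.
  rewrite /T; apply: mulr_gt0; last by apply: divr_gt0.
  rewrite -mulrA; apply: mulr_gt0 => //.
  by rewrite exprn_even_gt0.
have Tge0 : 0 < Z1 pi1 lam -> forall i, 0 <= T i.
  move=> Zp i; rewrite /T; apply: mulr_ge0; last first.
    apply: divr_ge0; last exact: ltW.
    by rewrite /Lam; case/andP: (hmu i) => a b; apply: mulr_ge0; rewrite ?subr_ge0.
  rewrite -mulrA; apply: mulr_ge0; first exact: sqr_ge0.
  exact: ltW.
split.
- move=> lp [k lk].
  have F1 : forall j, 1 <= 1 + pi2 pi1 * lam j.
    by move=> j; rewrite lerDl; apply: mulr_ge0 => //; exact: ltW.
  have F2 : forall j, 0 <= 1 - pi1 * lam j <= 1.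
    move=> j; apply/andP; split; first by case: (fb j).
    by rewrite lerBlDr lerDl; apply: mulr_ge0 => //; exact: ltW.
  have Zp : 0 < Z1 pi1 lam.
    have a1 : 1 <= \prod_(j < D) (1 + pi2 pi1 * lam j).
      by apply: (big_ind (fun x => 1 <= x)) => // x y hx hy; nra.
    have a2 : 0 <= \prod_(j < D) (1 - pi1 * lam j).
      by apply: prodr_ge0 => j _; case/andP: (F2 j).
    rewrite /Z1; nra.
  have B1ge : forall i, 1 <= B1 pi1 lam i by move=> i; rewrite /B1; exact: prod_ge1.
  have B2le : forall i, B2 pi1 lam i <= 1 by move=> i; rewrite /B2; exact: prod_le1.
  have Tg := Tge0 Zp.
  split => i; rewrite ME; last first.
    by have := B1ge i; have := B2le i; have := Tg i; nra.
  have [li0|li] := eqVneq (lam i) 0.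
    have ki : k != i by apply/eqP => e; move: lk; rewrite e li0 eqxx.
    have lkp : 0 < lam k by rewrite lt_def lk lp.
    have Bg : 1 < B1 pi1 lam i.
      rewrite /B1; apply: (prod_gt1 F1 ki).
      by rewrite ltrDl; apply: mulr_gt0.
    have := Tpos Zp i k ki li0 lk; have := B2le i; rewrite li0; nra.
  have lip : 0 < lam i by rewrite lt_def li lp.
  by have := B1ge i; have := B2le i; have := Tg i; nra.
- move=> lp [k lk].
  have F1 : forall j, 0 <= 1 + pi2 pi1 * lam j <= 1.
    move=> j; apply/andP; split; first by case: (fb j).
    by have := lp j; nra.
  have F2 : forall j, 1 <= 1 - pi1 * lam j.
    by move=> j; have := lp j; nra.
  have Zp : 0 < Z1 pi1 lam.
    have a1 : 1 <= \prod_(j < D) (1 - pi1 * lam j).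
      by apply: (big_ind (fun x => 1 <= x)) => // x y hx hy; nra.
    have a2 : 0 <= \prod_(j < D) (1 + pi2 pi1 * lam j).
      by apply: prodr_ge0 => j _; case/andP: (F1 j).
    rewrite /Z1; nra.
  have B2ge : forall i, 1 <= B2 pi1 lam i by move=> i; rewrite /B2; exact: prod_ge1.
  have B1le : forall i, B1 pi1 lam i <= 1 by move=> i; rewrite /B1; exact: prod_le1.
  have Tg := Tge0 Zp.
  split => i; rewrite ME; last first.
    by have := B2ge i; have := B1le i; have := Tg i; nra.
  have [li0|li] := eqVneq (lam i) 0.
    have ki : k != i by apply/eqP => e; move: lk; rewrite e li0 eqxx.
    have lkp : lam k < 0 by rewrite lt_neqAle lk lp.
    have Bg : 1 < B2 pi1 lam i.
      rewrite /B2; apply: (prod_gt1 F2 ki).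
      nra.
    have := Tpos Zp i k ki li0 lk; have := B1le i; rewrite li0; nra.
  have lip : lam i < 0 by rewrite lt_neqAle li lp.
  by have := B2ge i; have := B1le i; have := Tg i; nra.
Qed.
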